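(* Let $p\geq 2$ be an even integer and let $U_p=\bigcup_{n\in 2\mathbb Z_+}\mathbb Z_p^n$. Let $\boldsymbol a,\boldsymbol b\in U_p$ be equivalent (in the sense defined in the context). Then $\mu_p(\boldsymbol a)=\mu_p(\boldsymbol b)$.
   Context: $\mathbb Z_+$ denotes the positive integers and $\mathbb Z_p=\mathbb Z/p\mathbb Z$. Two elements of $U_p$ are called equivalent if they are related by a finite sequence of the following transformations of $(a_1,\ldots,a_n)\in\mathbb Z_p^n$ ($n$ even): (Op1) $(a_1,\ldots,a_n)\to(a_2,\ldots,a_n,a_1)$; (Op2) $(a_1,\ldots,a_n)\to(a, a_2+(-1)^2(a_1-a),\ldots,a_i+(-1)^i(a_1-a),\ldots,a_n+(-1)^n(a_1-a))$ for any $a\in\mathbb Z_p$; (Op3) $(a_1,\ldots,a_n)\to(a, a_1-a_2+a,\ldots,a_1-a_i+a,\ldots,a_1-a_n+a)$ for any $a\in\mathbb Z_p$; (Op4) $(a_1,\ldots,a_n)\to(a_1,-a_1+a_2+a_3,a_3,\ldots,a_n)$ when $n>3$. For $p$ even, parity of elements of $\mathbb Z_p$ is well defined. For a tuple $(b_1,\ldots,b_n)$ of elements of $\mathbb Z_p$, let $E(b_1,\ldots,b_n)=\#\{i\in\{1,\ldots,n\}: b_i\equiv 0\pmod 2\}$ and $O(b_1,\ldots,b_n)=\#\{i: b_i\equiv 1\pmod 2\}$. Define $\mu_p:U_p\to\mathbb Z$ by $\mu_p(a_1,\ldots,a_n)=E(a_1+a_2,a_2+a_3,\ldots,a_n+a_1)-O(a_1+a_2,a_2+a_3,\ldots,a_n+a_1)$.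 *)

(* Defs.v *)
From HB Require Import structures.
From mathcomp Require Import all_boot all_order all_algebra.
From Stdlib Require Import Relation_Operators.
Set Implicit Arguments. Unset Strict Implicit. Unset Printing Implicit Defensive.
Import GRing.Theory Num.Theory.
Local Open Scope ring_scope.

(* Tuples (a_1,...,a_n) are sequences s with a_i = nth 0 s (i-1). *)

Definition inU (p : nat) (s : seq 'Z_p) : bool :=
  (0 < size s)%N && ~~ odd (size s).

Definition op1 (p : nat) (s : seq 'Z_p) : seq 'Z_p := rot 1 s.

(* Op2: a_i -> a_i + (-1)^i (a_1 - a), i = 1..n (the i=1 entry becomes a) *)
Definition op2 (p : nat) (a : 'Z_p) (s : seq 'Z_p) : seq 'Z_p :=
  mkseq (fun i => nth 0 s i + (-1) ^+ i.+1 * (nth 0 s 0 - a)) (size s).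

Definition op3 (p : nat) (a : 'Z_p) (s : seq 'Z_p) : seq 'Z_p :=
  mkseq (fun i => nth 0 s 0 - nth 0 s i + a) (size s).

Definition op4 (p : nat) (s : seq 'Z_p) : seq 'Z_p :=
  match s with
  | a1 :: a2 :: a3 :: t => a1 :: (- a1 + a2 + a3) :: a3 :: t
  | _ => s
  end.

Definition step (p : nat) (s t : seq 'Z_p) : Prop :=
  inU s /\
  [\/ t = op1 s,
      exists a, t = op2 a s,
      exists a, t = op3 a s
    | (3 < size s)%N /\ t = op4 s].

Definition equivU (p : nat) : seq 'Z_p -> seq 'Z_p -> Prop :=
  clos_refl_sym_trans (seq 'Z_p) (@step p).

(* parity of an element of Z_p (well defined since p is even) *)
Definition oddZp (p : nat) (x : 'Z_p) : bool := odd (val x).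

Definition cyc_sums (p : nat) (s : seq 'Z_p) : seq 'Z_p :=
  [seq xy.1 + xy.2 | xy <- zip s (rot 1 s)].

Definition mu (p : nat) (s : seq 'Z_p) : int :=
  (count (fun x => ~~ oddZp x) (cyc_sums s))%:Z
  - (count (@oddZp p) (cyc_sums s))%:Z.

(* Main.v *)
Require Import Defs.
From mathcomp Require Import all_boot all_order all_algebra.
From Stdlib Require Import Relation_Operators.
Set Implicit Arguments. Unset Strict Implicit. Unset Printing Implicit Defensive.
Import GRing.Theory Num.Theory.

Lemma oddZpD (p : nat) : (2 <= p)%N -> ~~ odd p -> forall x y : 'Z_p,
  oddZp (x + y)%R = oddZp x (+) oddZp y.
Proof.
case: p => [|[|m]] // _ hm x y.
rewrite /oddZp.
change (odd ((val x + val y) %% m.+2) = odd (val x) (+) odd (val y)).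
by rewrite odd_mod ?oddD //; apply/negbTE.
Qed.

Lemma oddZpN (p : nat) : (2 <= p)%N -> ~~ odd p -> forall x : 'Z_p,
  oddZp (- x)%R = oddZp x.
Proof.
case: p => [|[|m]] // _ hm x.
rewrite /oddZp.
change (odd ((m.+2 - val x) %% m.+2) = odd (val x)).
rewrite odd_mod; last by apply/negbTE.
rewrite oddB; last by apply: ltnW; exact: ltn_ord.
by rewrite (negbTE hm).
Qed.

Lemma size_cyc p (s : seq 'Z_p) : size (cyc_sums s) = size s.
Proof. by rewrite /cyc_sums size_map size_zip size_rot minnn. Qed.

Lemma nth_cyc p (s : seq 'Z_p) i : (i < size s)%N ->
  nth 0%R (cyc_sums s) i =
  (nth 0 s i + nth 0 s (if i.+1 == size s then 0 else i.+1))%R.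
Proof.
case: s => [|x t] //= Hi.
rewrite /cyc_sums rot1_cons (nth_map (0%R, 0%R)); last first.
  by rewrite size_zip size_rcons /= minnn.
rewrite nth_zip; last by rewrite size_rcons.
rewrite nth_rcons /= eqSS.
case: ltngtP => H //=.
by move: Hi; rewrite ltnS leqNgt H.
Qed.

Lemma zip_rot1 (S T : Type) (s : seq S) (t : seq T) : size s = size t ->
  zip (rot 1 s) (rot 1 t) = rot 1 (zip s t).
Proof.
case: s => [|x s]; case: t => [|y t] //= [E].
by rewrite !rot1_cons zip_rcons.
Qed.

Definition par p (s : seq 'Z_p) := map (@oddZp p) (cyc_sums s).

Lemma mu_perm p (s t : seq 'Z_p) : perm_eq (par s) (par t) -> mu s = mu t.
Proof.
move/permP=> E.
have E' : forall P : pred bool, count (fun x => P (oddZp x)) (cyc_sums s)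
                              = count (fun x => P (oddZp x)) (cyc_sums t).
  move=> P; have := E P; by rewrite /par !count_map.
by rewrite /mu (E' negb) (E' id).
Qed.

Local Open Scope ring_scope.

Lemma op1_ok p (s : seq 'Z_p) : mu (op1 s) = mu s.
Proof.
apply: mu_perm; rewrite /par.
have -> : cyc_sums (op1 s) = rot 1 (cyc_sums s).
  by rewrite /cyc_sums /op1 zip_rot1 ?size_rot // map_rot.
by rewrite map_rot perm_rot perm_refl.
Qed.

Lemma op2_ok p a (s : seq 'Z_p) : ~~ odd (size s) -> mu (op2 a s) = mu s.
Proof.
move=> ev; rewrite /mu; suff -> : cyc_sums (op2 a s) = cyc_sums s by [].
have Hs : size (op2 a s) = size s by rewrite size_mkseq.
apply: (@eq_from_nth _ 0); first by rewrite !size_cyc.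
move=> i; rewrite size_cyc Hs => Hi.
have Hj : ((if i.+1 == size s then 0 else i.+1) < size s)%N.
  case: eqP => H; first by apply: leq_ltn_trans Hi.
  by rewrite ltn_neqAle Hi andbT; apply/eqP.
rewrite !nth_cyc ?Hs // !nth_mkseq //.
rewrite addrACA -mulrDl.
suff -> : (-1) ^+ i.+1 + (-1) ^+ (if i.+1 == size s then 0 else i.+1).+1 = 0 :> 'Z_p.
  by rewrite mul0r addr0.
case: eqP => H.
  by rewrite -signr_odd H (negbTE ev) expr0 expr1 addrN.
by rewrite (exprS _ i.+1) mulN1r addrN.
Qed.

Lemma op3_ok p a (s : seq 'Z_p) : (2 <= p)%N -> ~~ odd p -> mu (op3 a s) = mu s.
Proof.
move=> hp hpe; apply: mu_perm.
have D := oddZpD hp hpe; have N := oddZpN hp hpe.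
suff -> : par (op3 a s) = par s by apply: perm_refl.
have Hs : size (op3 a s) = size s by rewrite size_mkseq.
apply: (@eq_from_nth _ false); first by rewrite /par !size_map !size_zip !size_rot Hs.
move=> i; rewrite /par size_map size_cyc Hs => Hi.
have Hj : ((if i.+1 == size s then 0 else i.+1) < size s)%N.
  case: eqP => H; first by apply: leq_ltn_trans Hi.
  by rewrite ltn_neqAle Hi andbT; apply/eqP.
rewrite !(nth_map (0 : 'Z_p)) ?size_cyc ?Hs // !nth_cyc ?Hs // !nth_mkseq //.
rewrite !(D, N).
by do ! case: (oddZp _).
Qed.

Lemma op4_ok p (s : seq 'Z_p) : (2 <= p)%N -> ~~ odd p -> (3 < size s)%N ->
  mu (op4 s) = mu s.
Proof.
move=> hp hpe.
have D := oddZpD hp hpe; have N := oddZpN hp hpe.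
case: s => [|a1 [|a2 [|a3 [|a4 r]]]] // _; apply: mu_perm.
rewrite /par /cyc_sums /op4 !rot1_cons /=.
have e1 : oddZp (a1 + (- a1 + a2 + a3)) = oddZp (a2 + a3).
  by rewrite !(D, N); do ! case: (oddZp _).
have e2 : oddZp (- a1 + a2 + a3 + a3) = oddZp (a1 + a2).
  by rewrite !(D, N); do ! case: (oddZp _).
rewrite e1 e2.
by apply/permP => P /=; rewrite addnCA.
Qed.

Theorem mainTheorem3 (p : nat) (hp : (2 <= p)%N) (hpe : ~~ odd p)
  (a b : seq 'Z_p) (ha : inU a) (hb : inU b) (hab : equivU a b) :
  mu a = mu b.
Proof.
clear ha hb.
elim: hab => [x y [hx Hs]|x|x y _ IH|x y z _ IH1 _ IH2] //.
- case: Hs => [->|[c ->]|[c ->]|[H4 ->]].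
  + by rewrite op1_ok.
  + by rewrite op2_ok //; case/andP: hx.
  + by rewrite op3_ok.
  + by rewrite op4_ok.
- by rewrite IH1 IH2.
Qed.
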